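(* Let $P_0,P_1,P_2\in\mathbb H$ be distinct and suppose that $P_0P_1P_2$ is not equilateral (i.e. not $\langle P_0,P_1\rangle=\langle P_1,P_2\rangle=\langle P_2,P_0\rangle$). Let $\varepsilon\in\{-1,1\}$ and for $i\in\mathbb Z/3\mathbb Z$ let $$R_i:=\frac{\sqrt{1-2\langle P_{i+1},P_{i+2}\rangle}(P_{i+1}+P_{i+2})+\varepsilon P_{i+1}\tilde\times P_{i+2}}{\sqrt3(1-\langle P_{i+1},P_{i+2}\rangle)}.$$ Let $\alpha:=-1+\langle P_0,P_1\rangle+\langle P_1,P_2\rangle+\langle P_2,P_0\rangle$, $\chi:=\langle P_0\tilde\times P_1,P_2\rangle$ and $d_i:=\sqrt{1-2\langle P_{i+1},P_{i+2}\rangle}$. Then $R_0R_1R_2$ is equilateral (i.e. $\langle R_0,R_1\rangle=\langle R_1,R_2\rangle=\langle R_2,R_0\rangle$) if and only if $$\alpha(d_0+d_1+d_2-d_0d_1d_2)+\varepsilon\chi(1-d_0d_1-d_1d_2-d_2d_0)=0.$$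
   Context: $\langle v,w\rangle=-v_1w_1+v_2w_2+v_3w_3$ on $\mathbb R^3$; $\mathbb H=\{P\in\mathbb R^3:\langle P,P\rangle=-1,\ P_1\ge1\}$; $v\tilde\times w:=J(v\times w)$ with $J=\mathrm{diag}(-1,1,1)$ and $\times$ the Euclidean cross product. Indices are in $\mathbb Z/3\mathbb Z$. *)

(* Defs.v *)
From HB Require Import structures.
From mathcomp Require Import all_boot all_order all_algebra.
Set Implicit Arguments. Unset Strict Implicit. Unset Printing Implicit Defensive.
Import Order.TTheory GRing.Theory Num.Theory.
Local Open Scope ring_scope.

Section Lorentz.
Variable R : rcfType.

Definition Jsign (k : 'I_3) : R := if k == 0 then -1 else 1.

Definition lor (v w : 'rV[R]_3) : R := \sum_(k < 3) Jsign k * v 0 k * w 0 k.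

Definition cross (v w : 'rV[R]_3) : 'rV[R]_3 :=
  \row_(k < 3) (v 0 (k + 1) * w 0 (k + 2) - v 0 (k + 2) * w 0 (k + 1)).

Definition lcross (v w : 'rV[R]_3) : 'rV[R]_3 :=
  \row_(k < 3) (Jsign k * cross v w 0 k).

Definition inH (P : 'rV[R]_3) : Prop := lor P P = -1 /\ 1 <= P 0 0.

Definition equilateral (P : 'I_3 -> 'rV[R]_3) : Prop :=
  lor (P 0) (P 1) = lor (P 1) (P 2) /\ lor (P 1) (P 2) = lor (P 2) (P 0).

Definition dd (P : 'I_3 -> 'rV[R]_3) (i : 'I_3) : R :=
  Num.sqrt (1 - 2 * lor (P (i + 1)) (P (i + 2))).

Definition Rpt (eps : R) (P : 'I_3 -> 'rV[R]_3) (i : 'I_3) : 'rV[R]_3 :=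
  (Num.sqrt 3 * (1 - lor (P (i + 1)) (P (i + 2))))^-1 *:
   (dd P i *: (P (i + 1) + P (i + 2)) + eps *: lcross (P (i + 1)) (P (i + 2))).

Definition alpha (P : 'I_3 -> 'rV[R]_3) : R :=
  -1 + lor (P 0) (P 1) + lor (P 1) (P 2) + lor (P 2) (P 0).

Definition chi (P : 'I_3 -> 'rV[R]_3) : R := lor (lcross (P 0) (P 1)) (P 2).

End Lorentz.

(* Main.v *)
Require Import Defs.
From HB Require Import structures.
From mathcomp Require Import all_boot all_order all_algebra.
From mathcomp Require Import ring lra.
Import Order.TTheory GRing.Theory Num.Theory.
Local Open Scope ring_scope.


Lemma lorE {R : rcfType} (u v : 'rV[R]_3) : lor u v = - (u 0 0 * v 0 0) + u 0 1 * v 0 1 + u 0 2 * v 0 2.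
Proof.
rewrite /lor !big_ord_recr big_ord0 /= /Jsign /=.
rewrite (_ : widen_ord _ (widen_ord _ ord_max) = 0); last by apply/val_inj.
rewrite (_ : widen_ord _ ord_max = 1); last by apply/val_inj.
rewrite (_ : ord_max = 2); last by apply/val_inj.
ring.
Qed.

Lemma o01 : (0 + 1 : 'I_3) = 1. Proof. by apply/val_inj. Qed.
Lemma o02 : (0 + 2 : 'I_3) = 2. Proof. by apply/val_inj. Qed.
Lemma o11 : (1 + 1 : 'I_3) = 2. Proof. by apply/val_inj. Qed.
Lemma o12 : (1 + 2 : 'I_3) = 0. Proof. by apply/val_inj. Qed.
Lemma o21 : (2 + 1 : 'I_3) = 0. Proof. by apply/val_inj. Qed.
Lemma o22 : (2 + 2 : 'I_3) = 1. Proof. by apply/val_inj. Qed.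

Lemma lcE {R : rcfType} (u v : 'rV[R]_3) : [/\ lcross u v 0 0 = - (u 0 1 * v 0 2 - u 0 2 * v 0 1),
  lcross u v 0 1 = u 0 2 * v 0 0 - u 0 0 * v 0 2 &
  lcross u v 0 2 = u 0 0 * v 0 1 - u 0 1 * v 0 0].
Proof. by rewrite !mxE /Jsign /= !o01 !o02 !o11 !o12 !o21 !o22; split; ring. Qed.

Lemma key {R : rcfType} (u v w : 'rV[R]_3) (d f e : R) :
  lor (d *: (v + w) + e *: lcross v w) (f *: (w + u) + e *: lcross w u) =
  d * f * (lor u v + lor v w + lor w u + lor w w) + e * (d + f) * lor (lcross u v) w
  + e ^+ 2 * (lor v u * lor w w - lor v w * lor w u).
Proof.
rewrite !lorE !mxE /Jsign /= !o01 !o02 !o11 !o12 !o21 !o22.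
ring.
Qed.

Lemma cyc {R : rcfType} (u v w : 'rV[R]_3) : lor (lcross u v) w = lor (lcross v w) u.
Proof.
rewrite !lorE !mxE /Jsign /= !o01 !o02 !o11 !o12 !o21 !o22; ring.
Qed.

Lemma lorC {R : rcfType} (u v : 'rV[R]_3) : lor u v = lor v u.
Proof. rewrite !lorE; ring. Qed.

Lemma lorZ {R : rcfType} (a b : R) (u v : 'rV[R]_3) : lor (a *: u) (b *: v) = a * b * lor u v.
Proof. rewrite !lorE !mxE; ring. Qed.

Lemma lor_le {R : rcfType} (u v : 'rV[R]_3) : inH u -> inH v -> lor u v <= -1.
Proof.
rewrite /inH !lorE => -[hu u0] [hv v0].
have h1 : (1 + u 0 1 * v 0 1 + u 0 2 * v 0 2) ^+ 2 <= (u 0 0 * v 0 0) ^+ 2.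
  have -> : (u 0 0 * v 0 0) ^+ 2 = (1 + u 0 1 ^+ 2 + u 0 2 ^+ 2) * (1 + v 0 1 ^+ 2 + v 0 2 ^+ 2).
    rewrite exprMn; congr (_ * _); rewrite expr2; lra.
  rewrite -subr_ge0.
  have -> : (1 + u 0 1 ^+ 2 + u 0 2 ^+ 2) * (1 + v 0 1 ^+ 2 + v 0 2 ^+ 2) - (1 + u 0 1 * v 0 1 + u 0 2 * v 0 2) ^+ 2
    = (u 0 1 - v 0 1) ^+ 2 + (u 0 2 - v 0 2) ^+ 2 + (u 0 1 * v 0 2 - u 0 2 * v 0 1) ^+ 2 by ring.
  by rewrite !addr_ge0 ?sqr_ge0.
have hp : 0 < u 0 0 * v 0 0 by nra.
nra.
Qed.
Lemma alg (R : rcfType) (s a0 a1 a2 d0 d1 d2 x eps : R) :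
  s != 0 -> a0 <= -1 -> a1 <= -1 -> a2 <= -1 ->
  d0 ^+ 2 = 1 - 2 * a0 -> d1 ^+ 2 = 1 - 2 * a1 -> d2 ^+ 2 = 1 - 2 * a2 ->
  ~ (a2 = a0 /\ a0 = a1) ->
  (s * (1 - a0))^-1 / (s * (1 - a1)) *
  (d0 * d1 * (a2 + a0 + a1 - 1) + eps * (d0 + d1) * x + 1 * (a2 * -1 - a0 * a1)) =
  (s * (1 - a1))^-1 / (s * (1 - a2)) *
  (d1 * d2 * (a0 + a1 + a2 - 1) + eps * (d1 + d2) * x + 1 * (a0 * -1 - a1 * a2)) /\
  (s * (1 - a1))^-1 / (s * (1 - a2)) *
  (d1 * d2 * (a0 + a1 + a2 - 1) + eps * (d1 + d2) * x + 1 * (a0 * -1 - a1 * a2)) =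
  (s * (1 - a2))^-1 / (s * (1 - a0)) *
  (d2 * d0 * (a1 + a2 + a0 - 1) + eps * (d2 + d0) * x + 1 * (a1 * -1 - a2 * a0)) <->
  (-1 + a2 + a0 + a1) * (d0 + d1 + d2 - d0 * d1 * d2) +
  eps * x * (1 - d0 * d1 - d1 * d2 - d2 * d0) = 0.
Proof.
move=> s0 l0 l1 l2 h0 h1 h2 hne.
have c0 : 1 - a0 != 0 by rewrite subr_eq0; apply/eqP => E; lra.
have c1 : 1 - a1 != 0 by rewrite subr_eq0; apply/eqP => E; lra.
have c2 : 1 - a2 != 0 by rewrite subr_eq0; apply/eqP => E; lra.
have ha0 : a0 = (1 - d0 ^+ 2) / 2 by rewrite h0; field.
have ha1 : a1 = (1 - d1 ^+ 2) / 2 by rewrite h1; field.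
have ha2 : a2 = (1 - d2 ^+ 2) / 2 by rewrite h2; field.
have q0 : 2 - (1 - d0 ^+ 2) != 0 by have := sqr_ge0 d0; move=> ?; apply/eqP => E; lra.
have q1 : 2 - (1 - d1 ^+ 2) != 0 by have := sqr_ge0 d1; move=> ?; apply/eqP => E; lra.
have q2 : 2 - (1 - d2 ^+ 2) != 0 by have := sqr_ge0 d2; move=> ?; apply/eqP => E; lra.
set K := - ((s * (1 - a0))^-1 * (s * (1 - a1))^-1 * (s * (1 - a2))^-1 * s) / 2.
have K0 : K != 0.
  by rewrite /K mulf_neq0 ?oppr_eq0 ?invr_eq0 ?mulf_neq0 ?invr_eq0 ?mulf_neq0 // ?pnatr_eq0.
match goal with |- (?A = ?B /\ ?C = ?D) <-> ?F = 0 =>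
  have e1 : A - B = K * (d2 - d0) * F;
  [ | have e2 : C - D = K * (d0 - d1) * F; [ | ] ]
end.
- rewrite /K; move: c0 c1 c2; rewrite ha0 ha1 ha2 => c0' c1' c2'. field. 
  by rewrite s0 q0 q1 q2.
- rewrite /K; move: c0 c1 c2; rewrite ha0 ha1 ha2 => c0' c1' c2'. field. 
  by rewrite s0 q0 q1 q2.
split.
- case=> E1 E2.
  have [//|Fn] := eqVneq ((-1 + a2 + a0 + a1) * (d0 + d1 + d2 - d0 * d1 * d2) +
    eps * x * (1 - d0 * d1 - d1 * d2 - d2 * d0)) 0.
  exfalso; apply: hne.
  move: e1 e2; rewrite E1 E2 !subrr => /esym/eqP e1 /esym/eqP e2.
  have /eqP f1 : d2 - d0 == 0.
    by move: e1; rewrite mulf_eq0 (negbTE Fn) orbF mulf_eq0 (negbTE K0).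
  have /eqP f2 : d0 - d1 == 0.
    by move: e2; rewrite mulf_eq0 (negbTE Fn) orbF mulf_eq0 (negbTE K0).
  move/eqP: f1; rewrite subr_eq0 => /eqP f1; move/eqP: f2; rewrite subr_eq0 => /eqP f2.
  by rewrite ha0 ha1 ha2 f1 f2.
- move=> hF; split; apply/eqP; rewrite -subr_eq0 ?e1 ?e2 hF mulr0 //.
Qed.

Theorem corollary4p2 (R : rcfType) (P : 'I_3 -> 'rV[R]_3) (eps : R)
  (hH : forall i, inH (P i))
  (h01 : P 0 <> P 1) (h12 : P 1 <> P 2) (h20 : P 2 <> P 0)
  (hne : ~ equilateral P)
  (heps : eps = 1 \/ eps = -1) :
  equilateral (Rpt eps P) <->
  alpha P * (dd P 0 + dd P 1 + dd P 2 - dd P 0 * dd P 1 * dd P 2)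
  + eps * chi P * (1 - dd P 0 * dd P 1 - dd P 1 * dd P 2 - dd P 2 * dd P 0) = 0.
Proof.
have le0 : lor (P 1) (P 2) <= -1 by apply: lor_le.
have le1 : lor (P 2) (P 0) <= -1 by apply: lor_le.
have le2 : lor (P 0) (P 1) <= -1 by apply: lor_le.
have n0 : lor (P 0) (P 0) = -1 by case: (hH 0).
have n1 : lor (P 1) (P 1) = -1 by case: (hH 1).
have n2 : lor (P 2) (P 2) = -1 by case: (hH 2).
have e2 : eps ^+ 2 = 1 by case: heps => ->; rewrite ?expr1n ?sqrrN ?expr1n.
move: hne; rewrite /equilateral /Rpt /alpha /chi /dd !o01 !o02 !o11 !o12 !o21 !o22.
rewrite !lorZ !key !n0 !n1 !n2 e2.
rewrite (lorC (P 1) (P 0)) (lorC (P 2) (P 1)) (lorC (P 0) (P 2)).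
rewrite (cyc (P 1) (P 2) (P 0)) (cyc (P 2) (P 0) (P 1)).
set a0 := lor (P 1) (P 2); set a1 := lor (P 2) (P 0); set a2 := lor (P 0) (P 1).
set x := lor (lcross (P 0) (P 1)) (P 2).
move=> hne; apply: alg => //.
- by rewrite gt_eqF // sqrtr_gt0 ltr0n.
- rewrite sqr_sqrtr //; move: le0; rewrite -/a0; clear; move=> h; lra.
- rewrite sqr_sqrtr //; move: le1; rewrite -/a1; clear; move=> h; lra.
- rewrite sqr_sqrtr //; move: le2; rewrite -/a2; clear; move=> h; lra.
Qed.
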